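(* Let $d\ge 2$ and $\alpha\ge 1$ be integers and $G$ a finite graph. Then $K_{2+\alpha}\star G$ is $d$-ball packable if and only if $G$ is isomorphic to the tangency graph of a $(d-1,\alpha)$-kissing configuration.
   Context: A $(n,\alpha)$-kissing configuration is a packing of unit $n$-balls (in $\mathbb R^n$) each of which is tangent to each of $\alpha$ fixed pairwise tangent unit $n$-balls (the $\alpha$ fixed balls are not part of the configuration); its tangency graph has the balls of the configuration as vertices and tangent pairs as edges. $K_n$ is the complete graph; $G\star H$ is the join of graphs. A $d$-ball in $\hat{\mathbb R}^d$ is a closed ball, closed exterior of an open ball with $\infty$, or a closed half-space with $\infty$; a $d$-ball packing is a collection of $d$-balls with disjoint interiors; its tangency graph joins balls meeting in exactly one point; a graph is $d$-ball packable if isomorphic to the tangency graph of some $d$-ball packing. *)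

(* Defs.v *)
From Stdlib Require Import Reals.
From mathcomp Require Import all_boot.
Set Implicit Arguments. Unset Strict Implicit. Unset Printing Implicit Defensive.

Local Open Scope R_scope.

(* A point of R^n is a function nat -> R whose coordinates of index >= n vanish. *)
Definition pt := nat -> R.
Definition inR (n : nat) (x : pt) : Prop := forall i : nat, le n i -> x i = 0.

Fixpoint sumR (n : nat) (f : nat -> R) : R :=
  match n with O => 0 | S k => sumR k f + f k end.

Definition dot (n : nat) (x y : pt) : R := sumR n (fun i => x i * y i).
Definition dist2 (n : nat) (x y : pt) : R := sumR n (fun i => (x i - y i) * (x i - y i)).

(* ---------- d-balls in the one-point compactification \hat R^d = option pt
   (None = the point at infinity) ---------- *)
Inductive dball : Type :=
| DBall   (c : pt) (r : R)
| DCoBall (c : pt) (r : R)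
| DHalf   (a : pt) (b : R).

Definition valid_dball (d : nat) (B : dball) : Prop :=
  match B with
  | DBall c r => inR d c /\ 0 < r
  | DCoBall c r => inR d c /\ 0 < r
  | DHalf a b => inR d a /\ exists i, lt i d /\ a i <> 0
  end.

Definition in_dball (d : nat) (B : dball) (p : option pt) : Prop :=
  match B, p with
  | DBall c r, Some x => inR d x /\ dist2 d x c <= r * r
  | DBall _ _, None => False
  | DCoBall c r, Some x => inR d x /\ r * r <= dist2 d x c
  | DCoBall _ _, None => True
  | DHalf a b, Some x => inR d x /\ dot d a x <= b
  | DHalf _ _, None => True
  end.

(* topological interior in \hat R^d (oo is interior to a ball exterior,
   but lies on the boundary of a half-space) *)
Definition int_dball (d : nat) (B : dball) (p : option pt) : Prop :=
  match B, p with
  | DBall c r, Some x => inR d x /\ dist2 d x c < r * r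
  | DBall _ _, None => False
  | DCoBall c r, Some x => inR d x /\ r * r < dist2 d x c
  | DCoBall _ _, None => True
  | DHalf a b, Some x => inR d x /\ dot d a x < b
  | DHalf _ _, None => False
  end.

Definition dtangent (d : nat) (B1 B2 : dball) : Prop :=
  exists p, in_dball d B1 p /\ in_dball d B2 p /\
    forall q, in_dball d B1 q -> in_dball d B2 q -> q = p.

Definition dpacking (d : nat) (V : Type) (B : V -> dball) : Prop :=
  (forall v, valid_dball d (B v)) /\
  (forall u v, u <> v -> forall p, ~ (int_dball d (B u) p /\ int_dball d (B v) p)).

Definition ball_packable (d : nat) (V : Type) (adj : V -> V -> bool) : Prop :=
  exists B : V -> dball, dpacking d B /\
    forall u v, adj u v <-> (u <> v /\ dtangent d (B u) (B v)).

Definition in_ubal (n : nat) (c x : pt) : Prop := inR n x /\ dist2 n x c <= 1.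
Definition int_ubal (n : nat) (c x : pt) : Prop := inR n x /\ dist2 n x c < 1.
Definition utangent (n : nat) (c1 c2 : pt) : Prop :=
  exists x, in_ubal n c1 x /\ in_ubal n c2 x /\
    forall y, in_ubal n c1 y -> in_ubal n c2 y -> y = x.

Definition kissing_graph (n alpha : nat) (V : Type) (adj : V -> V -> bool) : Prop :=
  exists (F : nat -> pt) (C : V -> pt),
    (forall i, lt i alpha -> inR n (F i)) /\
    (forall i j, lt i alpha -> lt j alpha -> i <> j -> utangent n (F i) (F j)) /\
    (forall v, inR n (C v)) /\
    (forall u v, u <> v -> forall x, ~ (int_ubal n (C u) x /\ int_ubal n (C v) x)) /\
    (forall v i, lt i alpha -> utangent n (C v) (F i)) /\
    (forall u v, adj u v <-> (u <> v /\ utangent n (C u) (C v))).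

Definition join_adj (m : nat) (V : Type) (adj : V -> V -> bool)
  (x y : ('I_m + V)%type) : bool :=
  match x, y with
  | inl i, inl j => i != j
  | inr u, inr v => adj u v
  | _, _ => true
  end.

(* Main.v *)
Require Import Defs.
From Stdlib Require Import Reals Lra Psatz FunctionalExtensionality.
From mathcomp Require Import all_boot zify.
Set Implicit Arguments. Unset Strict Implicit. Unset Printing Implicit Defensive.
Local Open Scope R_scope.

Ltac sumind n := induction n as [|n IHn]; simpl; [ring | rewrite IHn; ring].

Lemma sumR_ext n f g : (forall i, lt i n -> f i = g i) -> sumR n f = sumR n g.
Proof. induction n; simpl; intros H; [reflexivity|]. rewrite IHn; [rewrite H; auto|]. intros; apply H; lia. Qed.

Lemma sumR_nonneg n f : (forall i, lt i n -> 0 <= f i) -> 0 <= sumR n f.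
Proof. induction n; simpl; intros H; [lra|]. assert (0 <= f n) by (apply H; lia).
assert (0 <= sumR n f) by (apply IHn; intros; apply H; lia). lra. Qed.

Lemma sumR_term n f i : (forall j, lt j n -> 0 <= f j) -> lt i n -> f i <= sumR n f.
Proof. induction n; simpl; intros H Hi; [lia|].
assert (0 <= f n) by (apply H; lia).
assert (0 <= sumR n f) by (apply sumR_nonneg; intros; apply H; lia).
destruct (Nat.eq_dec i n) as [->|Hn]; [lra|].
assert (f i <= sumR n f) by (apply IHn; [intros; apply H|]; lia). lra. Qed.

Lemma sumR_zero n f : (forall j, lt j n -> 0 <= f j) -> sumR n f <= 0 -> forall i, lt i n -> f i = 0.
Proof. intros H H0 i Hi. pose proof (sumR_term H Hi). pose proof (H i Hi). lra. Qed.

Lemma dot_sym n x y : dot n x y = dot n y x.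
Proof. unfold dot; apply sumR_ext; intros; ring. Qed.

Lemma dot_self_nonneg n x : 0 <= dot n x x.
Proof. apply sumR_nonneg; intros; nra. Qed.

Lemma dot_self_zero n x : dot n x x <= 0 -> forall i, lt i n -> x i = 0.
Proof. intros H i Hi. assert (x i * x i = 0).
{ apply (@sumR_zero n (fun i => x i * x i)); auto; intros; nra. } nra. Qed.

Lemma dist2_dot n x c : dist2 n x c = dot n x x - 2 * dot n x c + dot n c c.
Proof. unfold dist2, dot; sumind n. Qed.

Lemma dot_lin n a b x y z : dot n (fun i => a * x i + b * y i) z = a * dot n x z + b * dot n y z.
Proof. unfold dot; sumind n. Qed.

Lemma dot_linr n a b x y z : dot n z (fun i => a * x i + b * y i) = a * dot n z x + b * dot n z y.
Proof. unfold dot; sumind n. Qed.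

Lemma dot_scal n a x z : dot n (fun i => a * x i) z = a * dot n x z.
Proof. unfold dot; sumind n. Qed.

Lemma dot_scalr n a x z : dot n z (fun i => a * x i) = a * dot n z x.
Proof. unfold dot; sumind n. Qed.

Lemma dot_sub n x y z : dot n (fun i => x i - y i) z = dot n x z - dot n y z.
Proof. unfold dot; sumind n. Qed.

Lemma dot_subr n x y z : dot n z (fun i => x i - y i) = dot n z x - dot n z y.
Proof. unfold dot; sumind n. Qed.

Lemma dot_add n x y z : dot n (fun i => x i + y i) z = dot n x z + dot n y z.
Proof. unfold dot; sumind n. Qed.

Lemma dot_addr n x y z : dot n z (fun i => x i + y i) = dot n z x + dot n z y.
Proof. unfold dot; sumind n. Qed.

Lemma dot_ext n x y x' y' : (forall i, lt i n -> x i = x' i) -> (forall i, lt i n -> y i = y' i) ->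
  dot n x y = dot n x' y'.
Proof. intros H1 H2; unfold dot; apply sumR_ext; intros; rewrite H1 ?H2; auto. Qed.

Lemma dist2_sym n x y : dist2 n x y = dist2 n y x.
Proof. unfold dist2; apply sumR_ext; intros; ring. Qed.

Lemma dist2_as_dot n x y : dist2 n x y = dot n (fun i => x i - y i) (fun i => x i - y i).
Proof. reflexivity. Qed.

Lemma lagrange n x y : dot n (fun i => dot n x x * y i - dot n x y * x i) (fun i => dot n x x * y i - dot n x y * x i)
  = dot n x x * (dot n x x * dot n y y - dot n x y * dot n x y).
Proof.
  assert (E : forall a b, dot n (fun i => a * y i - b * x i) (fun i => a * y i - b * x i)
     = a*a*dot n y y - 2*a*b*dot n x y + b*b*dot n x x).
  { intros a0 b0; unfold dot; sumind n. }
  rewrite E. ring.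
Qed.

Lemma cauchy n x y : dot n x y * dot n x y <= dot n x x * dot n y y.
Proof.
  pose proof (dot_self_nonneg n x).
  destruct (Rle_lt_or_eq_dec _ _ H) as [Hp|H0].
  - pose proof (lagrange n x y) as L. pose proof (dot_self_nonneg n (fun i => dot n x x * y i - dot n x y * x i)) as L2.
    rewrite L in L2. nra.
  - assert (Z : forall i, lt i n -> x i = 0) by (apply dot_self_zero; lra).
    assert (Z2 : dot n x y = 0). { unfold dot. rewrite (@sumR_ext n _ (fun _ => 0)).
      clear; induction n; simpl; lra. intros; rewrite Z; auto; ring. }
    rewrite Z2 -H0; lra.
Qed.

Definition qb := (R * pt * R)%type.
Definition qA (s:qb) := fst (fst s).
Definition qv (s:qb) := snd (fst s).
Definition qC (s:qb) := snd s.
Definition qf d (s:qb) x := qA s * dot d x x - 2 * dot d x (qv s) + qC s.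
Definition qin d s (p : option pt) := match p with None => qA s <= 0 | Some x => inR d x /\ qf d s x <= 0 end.
Definition qint d s (p : option pt) := match p with None => qA s < 0 | Some x => inR d x /\ qf d s x < 0 end.
Definition qvalid d s := inR d (qv s) /\ 0 < dot d (qv s) (qv s) - qA s * qC s.
Definition qtang d s1 s2 := exists p, qin d s1 p /\ qin d s2 p /\ forall q, qin d s1 q -> qin d s2 q -> q = p.
Definition qdisj d s1 s2 := forall p, ~ (qint d s1 p /\ qint d s2 p).

Definition to_q d (B:dball) : qb := match B with
 | DBall c r => (1, c, dot d c c - r*r)
 | DCoBall c r => (-1, fun i => - c i, r*r - dot d c c)
 | DHalf a b => (0, fun i => - a i / 2, - b) end.

Lemma dot_prop n z x y k : (forall i, lt i n -> y i = k * x i) -> dot n z y = k * dot n z x.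
Proof. intros H. rewrite -dot_scalr. apply dot_ext; auto. Qed.

Lemma dot_propl n z x y k : (forall i, lt i n -> y i = k * x i) -> dot n y z = k * dot n x z.
Proof. intros H. rewrite -dot_scal. apply dot_ext; auto. Qed.

Lemma to_q_in d B p : (in_dball d B p <-> qin d (to_q d B) p) /\ (int_dball d B p <-> qint d (to_q d B) p).
Proof.
  destruct B as [c r|c r|a b]; destruct p as [x|]; simpl; unfold qf, qA, qv, qC; simpl;
    try (split; split; intros; lra).
  - rewrite dist2_dot. split; split; intros [H1 H2]; split; auto; lra.
  - rewrite dist2_dot (@dot_prop d x c (fun i => - c i) (-1)); [|intros; ring].
    split; split; intros [H1 H2]; split; auto; lra.
  - rewrite (@dot_prop d x a (fun i => - a i / 2) (-1/2)); [|intros; field].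
    rewrite (dot_sym d a x). split; split; intros [H1 H2]; split; auto; lra.
Qed.

Lemma sumsq_pos n a i : lt i n -> a i <> 0 -> 0 < dot n a a.
Proof. intros Hi Ha. pose proof (@sumR_term n (fun i => a i * a i) i). unfold dot.
  assert (0 < a i * a i). { destruct (Rlt_or_le (a i) 0); nra. }
  assert (a i * a i <= sumR n (fun i => a i * a i)) by (apply H; auto; intros; nra). lra. Qed.

Lemma to_q_valid d B : valid_dball d B -> qvalid d (to_q d B).
Proof.
  unfold qvalid, qA, qv, qC; destruct B as [c r|c r|a b]; simpl.
  - intros [H1 H2]; split; auto; nra.
  - intros [H1 H2]; split. intros i Hi; rewrite H1; auto; ring.
    rewrite (@dot_prop d _ c (fun i => - c i) (-1)); [|intros; ring].
    rewrite (@dot_propl d c c (fun i => - c i) (-1)); [|intros; ring]. nra.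
  - intros [H1 [i [Hi Ha]]]; split. intros j Hj; rewrite H1; auto; lra.
    rewrite (@dot_prop d _ a (fun i => - a i / 2) (-1/2)); [|intros; field].
    rewrite (@dot_propl d a a (fun i => - a i / 2) (-1/2)); [|intros; field].
    pose proof (sumsq_pos Hi Ha). nra.
Qed.

Lemma dtang_q d B1 B2 : dtangent d B1 B2 <-> qtang d (to_q d B1) (to_q d B2).
Proof.
  unfold dtangent, qtang. split; intros [p [H1 [H2 H3]]]; exists p;
  repeat split; try (apply (to_q_in d B1 p) || apply (to_q_in d B2 p); auto).
  - intros q Q1 Q2; apply H3; [apply (to_q_in d B1 q) | apply (to_q_in d B2 q)]; auto.
  - intros q Q1 Q2; apply H3; [apply (to_q_in d B1 q) | apply (to_q_in d B2 q)]; auto.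
Qed.

Lemma ddisj_q d B1 B2 : (forall p, ~ (int_dball d B1 p /\ int_dball d B2 p)) <-> qdisj d (to_q d B1) (to_q d B2).
Proof.
  unfold qdisj; split; intros H p [H1 H2]; apply (H p); split.
  all: first [apply (to_q_in d B1 p) | apply (to_q_in d B2 p)]; auto.
Qed.

Definition vp d (p : option pt) := match p with None => True | Some x => inR d x end.
Lemma qin_vp d s p : qin d s p -> vp d p. Proof. destruct p; simpl; tauto. Qed.
Lemma qint_vp d s p : qint d s p -> vp d p. Proof. destruct p; simpl; tauto. Qed.

Lemma transfer d (T : qb -> qb) (phi psi : option pt -> option pt) :
  (forall p, vp d p -> vp d (phi p) /\ vp d (psi p) /\ psi (phi p) = p /\ phi (psi p) = p) ->
  (forall s p, vp d p -> (qin d (T s) (phi p) <-> qin d s p) /\ (qint d (T s) (phi p) <-> qint d s p)) ->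
  forall s1 s2, (qtang d (T s1) (T s2) <-> qtang d s1 s2) /\ (qdisj d (T s1) (T s2) <-> qdisj d s1 s2).
Proof.
  intros Hb Hm s1 s2. unfold qtang, qdisj. split; split.
  - intros [p [H1 [H2 H3]]].
    assert (Vp := qin_vp H1). destruct (Hb p Vp) as [_ [Vq [_ E]]].
    exists (psi p). rewrite -E in H1 H2.
    split; [apply (Hm s1 _ Vq); auto|]. split; [apply (Hm s2 _ Vq); auto|].
    intros q Q1 Q2. assert (Vr := qin_vp Q1). destruct (Hb q Vr) as [Vf [_ [E2 _]]].
    rewrite -E2. f_equal. apply H3; [apply (Hm s1 _ Vr) | apply (Hm s2 _ Vr)]; auto.
  - intros [p [H1 [H2 H3]]].
    assert (Vp := qin_vp H1). destruct (Hb p Vp) as [Vf [_ [_ _]]].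
    exists (phi p). split; [apply (Hm s1 _ Vp); auto|]. split; [apply (Hm s2 _ Vp); auto|].
    intros q Q1 Q2. assert (Vr := qin_vp Q1). destruct (Hb q Vr) as [_ [Vq [_ E2]]].
    rewrite -E2 in Q1 Q2 *. f_equal. apply H3; [apply (Hm s1 _ Vq) | apply (Hm s2 _ Vq)]; auto.
  - intros H p [H1 H2]. assert (Vp := qint_vp H1). apply (H (phi p)).
    split; [apply (Hm s1 _ Vp) | apply (Hm s2 _ Vp)]; auto.
  - intros H p [H1 H2]. assert (Vp := qint_vp H1). destruct (Hb p Vp) as [_ [Vq [_ E]]].
    apply (H (psi p)). rewrite -E in H1 H2.
    split; [apply (Hm s1 _ Vq) | apply (Hm s2 _ Vq)]; auto.
Qed.

Definition Ttr d q (s:qb) : qb := (qA s, fun i => qv s i - qA s * q i, qA s * dot d q q - 2 * dot d q (qv s) + qC s).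
Definition phi_tr (q:pt) (p : option pt) := match p with None => None | Some x => Some (fun i => x i - q i) end.
Definition psi_tr (q:pt) (p : option pt) := match p with None => None | Some x => Some (fun i => x i + q i) end.

Lemma Ttr_f d q s x : qf d (Ttr d q s) (fun i => x i - q i) = qf d s x.
Proof.
  unfold qf, Ttr, qA, qv, qC; simpl.
  assert (E1 : dot d (fun i => x i - q i) (fun i => x i - q i) = dot d x x - 2 * dot d x q + dot d q q)
    by (rewrite -dist2_dot; reflexivity).
  assert (E2 : forall A v, dot d (fun i => x i - q i) (fun i => v i - A * q i) = dot d x v - A * dot d x q - dot d q v + A * dot d q q)
    by (intros; unfold dot; clear; induction d as [|n IHn]; simpl; [ring| rewrite IHn; ring]).
  rewrite E1 E2. ring.
Qed.

Lemma funext_inR d (x y : pt) : inR d x -> inR d y -> (forall i, lt i d -> x i = y i) -> x = y.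
Proof. intros Hx Hy H. apply functional_extensionality; intros i.
  destruct (Nat.lt_ge_cases i d) as [Hi|Hi]; [auto| rewrite Hx ?Hy; auto]. Qed.

Lemma tr_props d q : inR d q ->
  (forall p, vp d p -> vp d (phi_tr q p) /\ vp d (psi_tr q p) /\ psi_tr q (phi_tr q p) = p /\ phi_tr q (psi_tr q p) = p) /\
  (forall s p, vp d p -> (qin d (Ttr d q s) (phi_tr q p) <-> qin d s p) /\ (qint d (Ttr d q s) (phi_tr q p) <-> qint d s p)).
Proof.
  intros Hq. split.
  - intros [x|] Hx; simpl in *; [|tauto]. repeat split.
    + intros i Hi; rewrite Hx ?Hq; auto; ring.
    + intros i Hi; rewrite Hx ?Hq; auto; ring.
    + f_equal; apply functional_extensionality; intros; ring.
    + f_equal; apply functional_extensionality; intros; ring.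
  - intros s [x|] Hx; simpl in *; [|unfold Ttr, qA; simpl; tauto].
    rewrite Ttr_f.
    assert (inR d (fun i => x i - q i)) by (intros i Hi; rewrite Hx ?Hq; auto; ring). tauto.
Qed.

Lemma Ttr_valid d q s : inR d q -> qvalid d s -> qvalid d (Ttr d q s).
Proof.
  destruct s as [[A v] C]; unfold qvalid, Ttr, qA, qv, qC; simpl. intros Hq [Hv H]. split.
  - intros i Hi; rewrite Hv ?Hq; auto; ring.
  - assert (E : forall A, dot d (fun i => v i - A * q i) (fun i => v i - A * q i)
       = dot d v v - 2 * A * dot d q v + A * A * dot d q q)
     by (intros; unfold dot; clear; induction d as [|n IHn]; simpl; [ring| rewrite IHn; ring]).
    rewrite E. nra.
Qed.

Definition zero : pt := fun _ => 0.
Definition Tinv (s:qb) : qb := (qC s, qv s, qA s).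
Definition phi_inv d (p : option pt) := match p with
  | None => Some zero
  | Some x => if Req_EM_T (dot d x x) 0 then None else Some (fun i => / dot d x x * x i) end.

Lemma dot_zero_l d y : dot d zero y = 0.
Proof. unfold dot, zero; clear; induction d; simpl; [ring| rewrite IHd; ring]. Qed.

Lemma zero_of d x : inR d x -> dot d x x = 0 -> x = zero.
Proof. intros Hx H. apply funext_inR with d; auto. intros i _; unfold zero; reflexivity.
  intros i Hi; apply (@dot_self_zero d x); auto; lra. Qed.

Lemma inv_props d :
  (forall p, vp d p -> vp d (phi_inv d p) /\ vp d (phi_inv d p) /\ phi_inv d (phi_inv d p) = p /\ phi_inv d (phi_inv d p) = p) /\
  (forall s p, vp d p -> (qin d (Tinv s) (phi_inv d p) <-> qin d s p) /\ (qint d (Tinv s) (phi_inv d p) <-> qint d s p)).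
Proof.
  assert (IZ : inR d zero) by (intros i _; reflexivity).
  assert (PP : forall p, vp d p -> vp d (phi_inv d p) /\ phi_inv d (phi_inv d p) = p).
  { intros [x|] Hx; simpl in *.
    - destruct (Req_EM_T (dot d x x) 0) as [E|E]; simpl.
      + split; auto. f_equal. symmetry; apply (@zero_of d); auto.
      + split. intros i Hi; rewrite Hx; auto; ring.
        rewrite dot_scal dot_scalr.
        destruct (Req_EM_T _ 0) as [E2|E2].
        * exfalso. assert (/ dot d x x * (/ dot d x x * dot d x x) = / dot d x x) by (field; auto).
          rewrite H in E2. apply (Rinv_neq_0_compat _ E) in E2; auto.
        * simpl. f_equal; apply functional_extensionality; intros i. field. auto.
    - split; auto. rewrite dot_zero_l. destruct (Req_EM_T 0 0); [auto|lra]. }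
  split.
  - intros p Hp; destruct (PP p Hp); tauto.
  - intros s [x|] Hx; simpl in *.
    + destruct (Req_EM_T (dot d x x) 0) as [E|E]; simpl; unfold Tinv, qA, qf, qv, qC; simpl.
      * assert (x = zero) by (apply (@zero_of d); auto). subst x.
        rewrite !dot_zero_l. split; split; intros; try split; try tauto; try lra.
      * assert (Np : 0 < dot d x x) by (pose proof (dot_self_nonneg d x); lra).
        rewrite !dot_scal dot_scalr.
        assert (Ex : inR d (fun i => / dot d x x * x i)) by (intros i Hi; rewrite Hx; auto; ring).
        set (N := dot d x x) in *. set (g := dot d x (snd (fst s))).
        assert (K : / N * (/ N * N) = / N) by (field; lra).
        rewrite K.
        assert (K2 : snd s * / N - 2 * (/ N * g) + fst (fst s) = / N * (fst (fst s) * N - 2 * g + snd s)) by (field; lra).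
        rewrite K2. assert (0 < / N) by (apply Rinv_0_lt_compat; lra).
        unfold qA. split; split; intros [_ H1]; split; auto; nra.
    + unfold Tinv, qA, qf, qv, qC; simpl. rewrite !dot_zero_l. split; split; intros; try split; auto; lra.
Qed.

Lemma Tinv_valid d s : qvalid d s -> qvalid d (Tinv s).
Proof. unfold qvalid, Tinv, qA, qv, qC; simpl. intros [H1 H2]; split; auto; lra. Qed.

Definition Tm d (p : option pt) s := match p with None => s | Some q => Tinv (Ttr d q s) end.

Lemma Tm_props d p : vp d p -> forall s1 s2,
  (qtang d (Tm d p s1) (Tm d p s2) <-> qtang d s1 s2) /\ (qdisj d (Tm d p s1) (Tm d p s2) <-> qdisj d s1 s2).
Proof.
  destruct p as [q|]; simpl; intros Hq s1 s2; [|tauto].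
  destruct (tr_props Hq) as [A1 A2]. destruct (inv_props d) as [B1 B2].
  pose proof (transfer A1 A2 s1 s2). pose proof (transfer B1 B2 (Ttr d q s1) (Ttr d q s2)). tauto.
Qed.

Lemma Tm_valid d p s : vp d p -> qvalid d s -> qvalid d (Tm d p s).
Proof. destruct p; simpl; intros; auto. apply Tinv_valid, Ttr_valid; auto. Qed.

Lemma Tm_inf d p s : qin d s p -> qin d (Tm d p s) None.
Proof.
  destruct p as [q|]; simpl; [|auto]. intros [Hq Hf].
  destruct (tr_props Hq) as [_ A2]. destruct (inv_props d) as [_ B2].
  assert (H1 : qin d (Ttr d q s) (phi_tr q (Some q))) by (apply (A2 s (Some q)); simpl; auto).
  simpl in H1.
  assert (H2 : qin d (Tinv (Ttr d q s)) (phi_inv d (Some (fun i => q i - q i)))).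
  { apply (B2 _ (Some _)); simpl; auto; tauto. }
  assert (Z : dot d (fun i => q i - q i) (fun i => q i - q i) = 0).
  { rewrite -dist2_as_dot. unfold dist2. clear. induction d; simpl; [ring| rewrite IHd; ring]. }
  simpl in H2. rewrite Z in H2. destruct (Req_dec_T 0 0) as [E|E]; simpl in H2; [exact H2|lra].
Qed.

Lemma ev_neg a b c : a < 0 \/ (a = 0 /\ 0 < b) -> exists T, forall t, T <= t -> a*t*t - 2*b*t + c < 0.
Proof.
  pose proof (Rle_abs b). pose proof (Rle_abs (-b)). rewrite Rabs_Ropp in H0.
  pose proof (Rle_abs c).
  intros [Ha|[Ha Hb]].
  - set (K := 2 * Rabs b + Rabs c + 1).
    exists (1 + K / (- a)). intros t Ht.
    assert (E : (- a) * (K / (- a)) = K) by (field; lra).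
    assert (HK : 0 < K) by (unfold K; pose proof (Rabs_pos b); pose proof (Rabs_pos c); lra).
    assert (Hq : 0 < K / (-a)) by (apply Rdiv_lt_0_compat; lra).
    assert (Ht1 : 1 <= t) by lra.
    assert (Hat : a * t <= - K) by nra.
    assert (X : a * t - 2 * b <= - Rabs c - 1) by (unfold K in Hat; lra).
    assert (E2 : a*t*t - 2*b*t + c = t * (a * t - 2 * b) + c) by ring.
    rewrite E2. pose proof (Rabs_pos c).
    set (X0 := a * t - 2 * b) in *.
    assert (0 <= t - 1) by lra.
    assert (0 <= - X0) by lra. assert (0 <= (t - 1) * (- X0)) by (apply Rmult_le_pos; lra).
    nra.
  - subst a. exists ((Rabs c + 1) / (2 * b)). intros t Ht.
    assert (E : (2 * b) * ((Rabs c + 1) / (2 * b)) = Rabs c + 1) by (field; lra).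
    assert (2 * b * t >= Rabs c + 1) by nra. lra.
Qed.

Definition dcond d w s := qA s * dot d w w < 0 \/ (qA s * dot d w w = 0 /\ 0 < dot d w (qv s)).

Lemma qf_line d s w t : qf d s (fun i => t * w i) = (qA s * dot d w w) * t * t - 2 * dot d w (qv s) * t + qC s.
Proof. unfold qf. rewrite dot_scal dot_scalr dot_scal. ring. Qed.

Lemma L_dir d w s1 s2 : inR d w -> dcond d w s1 -> dcond d w s2 ->
  exists x, qint d s1 (Some x) /\ qint d s2 (Some x).
Proof.
  intros Hw H1 H2. destruct (ev_neg (qC s1) H1) as [T1 HT1]. destruct (ev_neg (qC s2) H2) as [T2 HT2].
  set (t := Rmax T1 T2). exists (fun i => t * w i).
  assert (inR d (fun i => t * w i)) by (intros i Hi; rewrite Hw; auto; ring).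
  simpl; rewrite !qf_line. split; split; auto; [apply HT1|apply HT2]; unfold t;
  [apply Rmax_l| apply Rmax_r].
Qed.

Definition e0 : pt := fun i => if Nat.eqb i 0 then 1 else 0.

Lemma e0_inR d : (1 <= d)%coq_nat -> inR d e0.
Proof. intros Hd i Hi. unfold e0. destruct (Nat.eqb_spec i 0); [lia|auto]. Qed.

Lemma e0_pos d : (1 <= d)%coq_nat -> 0 < dot d e0 e0.
Proof. intros Hd. apply (@sumsq_pos d e0 0); [lia| unfold e0; simpl; lra]. Qed.

Lemma L_far d s1 s2 : (1 <= d)%coq_nat -> qvalid d s1 -> qvalid d s2 -> qA s1 < 0 -> qA s2 <= 0 ->
  exists x, qint d s1 (Some x) /\ qint d s2 (Some x).
Proof.
  intros Hd [V1 P1] [V2 P2] A1 A2. destruct (Rle_lt_or_eq_dec _ _ A2) as [A2'|A2'].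
  - apply (@L_dir d e0); [apply e0_inR; auto| |]; left; pose proof (e0_pos Hd); nra.
  - apply (@L_dir d (qv s2)); auto.
    + left. rewrite A2' in P2. nra.
    + right. rewrite A2'. split; [ring| nra].
Qed.

Lemma L_half d s1 s2 : qvalid d s1 -> qvalid d s2 -> qA s1 = 0 -> qA s2 = 0 -> qdisj d s1 s2 ->
  exists mu, 0 < mu /\ forall i, qv s2 i = - mu * qv s1 i.
Proof.
  intros [V1 P1] [V2 P2] A1 A2 Hdis.
  rewrite A1 in P1; rewrite A2 in P2.
  set (v1 := qv s1) in *; set (v2 := qv s2) in *.
  set (n1 := dot d v1 v1) in *; set (n2 := dot d v2 v2) in *; set (g := dot d v1 v2).
  assert (Pn1 : 0 < n1) by lra. assert (Pn2 : 0 < n2) by lra.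
  set (x := fun i => (n2 - g) * v1 i + (n1 - g) * v2 i).
  assert (Ex : inR d x) by (intros i Hi; unfold x; rewrite V1 ?V2; auto; ring).
  assert (X1 : dot d x v1 = n1 * n2 - g * g).
  { unfold x; rewrite dot_lin. fold n1. rewrite (dot_sym d v2 v1). fold g. ring. }
  assert (X2 : dot d x v2 = n1 * n2 - g * g).
  { unfold x; rewrite dot_lin. fold n2 g. ring. }
  assert (CS := cauchy d v1 v2). fold n1 n2 g in CS.
  assert (D0 : n1 * n2 - g * g = 0).
  { destruct (Rle_lt_or_eq_dec _ _ (Rge_le _ _ (Rle_ge _ _ CS))) as [Hlt|Heq]; [|lra].
    exfalso. destruct (@L_dir d x s1 s2 Ex) as [y [Y1 Y2]].
    - right. rewrite A1. split; [ring| rewrite X1; lra].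
    - right. rewrite A2. split; [ring| rewrite X2; lra].
    - apply (Hdis (Some y)); auto. }
  assert (Lg := lagrange d v1 v2). fold n1 n2 g in Lg. rewrite D0 Rmult_0_r in Lg.
  assert (Hz : forall i, lt i d -> n1 * v2 i - g * v1 i = 0).
  { intros i Hi. apply (@dot_self_zero d (fun i => n1 * v2 i - g * v1 i)); auto. lra. }
  assert (Gn : g <> 0) by nra.
  assert (Gneg : g < 0).
  { destruct (Rlt_or_le g 0) as [Hg|Hg]; auto. exfalso.
    destruct (@L_dir d v1 s1 s2 V1) as [y [Y1 Y2]].
    - right. rewrite A1. split; [ring| fold v1 n1; lra].
    - right. rewrite A2. split; [ring| fold v1 v2 g; lra].
    - apply (Hdis (Some y)); auto. }
  exists (- g / n1). split. apply Rdiv_lt_0_compat; lra.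
  intros i. destruct (Nat.lt_ge_cases i d) as [Hi|Hi].
  - pose proof (Hz i Hi). field_simplify; [|lra]. apply (Rmult_eq_reg_l n1); [|lra].
    field_simplify; lra.
  - rewrite V1 ?V2; auto. ring.
Qed.

Definition qc (s:qb) : pt := fun i => / qA s * qv s i.
Definition qr d (s:qb) := (dot d (qv s) (qv s) - qA s * qC s) / (qA s * qA s).

Lemma qf_ball d s x : qA s <> 0 -> qf d s x = qA s * (dist2 d x (qc s) - qr d s).
Proof.
  intros HA. rewrite dist2_dot. unfold qc, qr, qf. rewrite dot_scalr dot_scal dot_scalr. field; auto.
Qed.

Lemma qc_inR d s : inR d (qv s) -> inR d (qc s).
Proof. intros H i Hi; unfold qc; rewrite H; auto; ring. Qed.

Lemma qr_pos d s : qvalid d s -> qA s <> 0 -> 0 < qr d s.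
Proof. intros [_ H] HA. unfold qr. apply Rdiv_lt_0_compat; auto. nra. Qed.

Lemma dist2_line d c t w : dist2 d (fun i => c i + t * w i) c = t * t * dot d w w.
Proof. unfold dist2, dot; sumind d. Qed.

Lemma L_ball_half d s h : qvalid d s -> qvalid d h -> 0 < qA s -> qA h = 0 -> qdisj d s h -> qtang d s h ->
  0 < qC h - 2 * dot d (qc s) (qv h) /\
  (qC h - 2 * dot d (qc s) (qv h)) * (qC h - 2 * dot d (qc s) (qv h)) = 4 * qr d s * dot d (qv h) (qv h).
Proof.
  intros Vs [Vh Ph] As Ah Hdis [p [T1 [T2 _]]].
  assert (As' : qA s <> 0) by lra.
  assert (Rp := qr_pos (proj1 (conj Vs Vs)) As').
  assert (Ic := qc_inR (proj1 Vs)).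
  rewrite Ah in Ph.
  set (c := qc s) in *. set (v0 := qv h) in *. set (r := qr d s) in *.
  set (n0 := dot d v0 v0) in *. set (hh := qC h - 2 * dot d c v0).
  assert (Pn : 0 < n0) by lra.
  assert (L1 : 0 < hh /\ 4 * r * n0 <= hh * hh).
  { set (k := sqrt (r * n0)).
    assert (Hk : k * k = r * n0) by (apply sqrt_sqrt; nra).
    assert (Kp : 0 < k) by (apply sqrt_lt_R0; nra).
    destruct (Rlt_or_le hh (2 * k)) as [Hlt|Hge]; [|split; nra].
    exfalso. set (m := Rmax hh (- k)).
    assert (M1 : hh <= m) by apply Rmax_l. assert (M2 : - k <= m) by apply Rmax_r.
    assert (M3 : m < 2 * k) by (unfold m; apply Rmax_lub_lt; lra).
    set (t := (m + 2 * k) / (4 * n0)).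
    assert (Tn : t * n0 = (m + 2 * k) / 4) by (unfold t; field; lra).
    assert (Tp : 0 < t) by (unfold t; apply Rdiv_lt_0_compat; lra).
    set (x := fun i => c i + t * v0 i).
    apply (Hdis (Some x)). simpl.
    assert (Ex : inR d x) by (intros i Hi; unfold x; rewrite Ic ?Vh; auto; ring).
    split; split; auto.
    - rewrite qf_ball; auto. fold c r. unfold x. rewrite dist2_line. fold n0.
      assert (t * n0 * (t * n0) < r * n0) by nra.
      assert (t * t * n0 < r) by nra. nra.
    - unfold qf. rewrite Ah. fold v0. unfold x.
      assert (E : dot d (fun i => c i + t * v0 i) v0 = dot d c v0 + t * n0)
        by (rewrite dot_add dot_scal; reflexivity).
      rewrite E.
      assert (hh < 2 * (t * n0)) by lra. unfold hh in H. nra. }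
  destruct p as [x|]; [|simpl in T1; lra].
  destruct T1 as [Ex F1]. destruct T2 as [_ F2].
  rewrite qf_ball in F1; auto. fold c r in F1.
  unfold qf in F2. rewrite Ah in F2. fold v0 in F2.
  assert (Dz : dist2 d x c <= r) by nra.
  set (z := fun i => x i - c i).
  assert (Z1 : dist2 d x c = dot d z z) by reflexivity.
  assert (Z2 : dot d z v0 = dot d x v0 - dot d c v0) by (unfold z; apply dot_sub).
  assert (CS := cauchy d z v0). fold n0 in CS.
  assert (2 * dot d z v0 >= hh) by (unfold hh; lra).
  split; [lra|]. destruct L1 as [L1a L1b].
  assert (hh * hh <= 4 * (dot d z v0 * dot d z v0)) by nra.
  assert (dot d z z * n0 <= r * n0) by nra.
  lra.
Qed.

Definition bin m c r x := inR m x /\ dist2 m x c <= r.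
Definition bint m c r x := inR m x /\ dist2 m x c < r.
Definition btang m c1 c2 r := exists x, bin m c1 r x /\ bin m c2 r x /\ forall y, bin m c1 r y -> bin m c2 r y -> y = x.

Lemma par_id m x c1 c2 : dot m (fun i => 2 * x i - c1 i - c2 i) (fun i => 2 * x i - c1 i - c2 i)
  = 2 * dist2 m x c1 + 2 * dist2 m x c2 - dist2 m c1 c2.
Proof. unfold dot, dist2; sumind m. Qed.

Definition lpt (c1 c2 : pt) a : pt := fun i => c1 i + a * (c2 i - c1 i).

Lemma lpt_1 m c1 c2 a : dist2 m (lpt c1 c2 a) c1 = a * a * dist2 m c1 c2.
Proof. unfold dist2, lpt; sumind m. Qed.
Lemma lpt_2 m c1 c2 a : dist2 m (lpt c1 c2 a) c2 = (1 - a) * (1 - a) * dist2 m c1 c2.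
Proof. unfold dist2, lpt; sumind m. Qed.
Lemma lpt_3 m c1 c2 a b : dist2 m (lpt c1 c2 a) (lpt c1 c2 b) = (a - b) * (a - b) * dist2 m c1 c2.
Proof. unfold dist2, lpt; sumind m. Qed.
Lemma lpt_inR m c1 c2 a : inR m c1 -> inR m c2 -> inR m (lpt c1 c2 a).
Proof. intros H1 H2 i Hi; unfold lpt; rewrite H1 ?H2; auto; ring. Qed.

Lemma dist2_nonneg m x y : 0 <= dist2 m x y.
Proof. apply dot_self_nonneg. Qed.

Lemma eqb_disj m c1 c2 r : inR m c1 -> inR m c2 ->
  (forall x, ~ (bint m c1 r x /\ bint m c2 r x)) <-> 4 * r <= dist2 m c1 c2.
Proof.
  intros H1 H2. split.
  - intros H. destruct (Rlt_or_le (dist2 m c1 c2) (4 * r)) as [Hl|]; auto. exfalso.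
    apply (H (lpt c1 c2 (1/2))). unfold bint. rewrite lpt_1 lpt_2.
    pose proof (lpt_inR (1/2) H1 H2). split; split; auto; lra.
  - intros H x [[_ X1] [_ X2]]. pose proof (par_id m x c1 c2).
    pose proof (dot_self_nonneg m (fun i => 2 * x i - c1 i - c2 i)). lra.
Qed.

Lemma dist2_extr m x c c' : (forall i, lt i m -> c i = c' i) -> dist2 m x c = dist2 m x c'.
Proof. intros H; unfold dist2; apply sumR_ext; intros i Hi; rewrite H; auto. Qed.

Lemma dist2_self m y : dist2 m y y = 0.
Proof. unfold dist2; induction m; simpl; [ring| rewrite IHm; ring]. Qed.

Lemma e0_norm m : (1 <= m)%coq_nat -> dot m e0 e0 = 1.
Proof. intros H. induction m; [lia|]. destruct m; [unfold dot, e0; simpl; ring|].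
  unfold dot in *; simpl in *. rewrite IHm; [|lia]. unfold e0; simpl; ring. Qed.

Lemma eqb_tang m c1 c2 r : (1 <= m)%coq_nat -> inR m c1 -> inR m c2 -> 0 < r ->
  btang m c1 c2 r <-> dist2 m c1 c2 = 4 * r.
Proof.
  intros Hm H1 H2 Hr. split.
  - intros [x [[X0 X1] [[_ X2] U]]].
    pose proof (par_id m x c1 c2).
    pose proof (dot_self_nonneg m (fun i => 2 * x i - c1 i - c2 i)).
    destruct (Rle_lt_or_eq_dec (dist2 m c1 c2) (4 * r)) as [Hl|]; [lra| |auto].
    exfalso. set (D := dist2 m c1 c2) in *.
    destruct (Rle_lt_or_eq_dec 0 D (dist2_nonneg _ _ _)) as [Dp|D0].
    + set (de := (4 * r - D) / (32 * r)).
      assert (De1 : 0 < de) by (unfold de; apply Rdiv_lt_0_compat; lra).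
      assert (De2 : de * (32 * r) = 4 * r - D) by (unfold de; field; lra).
      assert (De3 : de <= 1/8) by nra.
      assert (Ya : forall a, -de <= a <= de -> (1/2 + a) * (1/2 + a) * D <= r).
      { intros a Ha. assert (a * a <= de * de) by nra.
        assert (de * de <= de / 8) by nra.
        assert ((1/2 + a) * (1/2 + a) * D <= D/4 + a * D + de/8 * D) by nra.
        assert (a * D <= de * D) by nra.
        assert (de * D <= de * (4 * r)) by nra. nra. }
      assert (Q : forall a, -de <= a <= de -> lpt c1 c2 (1/2 + a) = x).
      { intros a Ha. apply U; split; try apply lpt_inR; auto; [rewrite lpt_1 | rewrite lpt_2]; fold D.
        - apply Ya; auto.
        - assert (Ee : (1 - (1/2 + a)) * (1 - (1/2 + a)) = (1/2 + - a) * (1/2 + - a)) by field.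
          rewrite Ee. apply Ya; lra. }
      assert (E1 := Q 0 ltac:(lra)). assert (E2 := Q de ltac:(lra)).
      pose proof (lpt_3 m c1 c2 (1/2 + 0) (1/2 + de)). rewrite E1 E2 dist2_self in H3.
      fold D in H3. assert (Ed : (1/2 + 0 - (1/2 + de)) = - de) by lra. rewrite Ed in H3.
      assert (0 < de * de * D) by (apply Rmult_lt_0_compat; nra). nra.
    + assert (Ceq : forall i, lt i m -> c1 i = c2 i).
      { intros i Hi. assert (c1 i - c2 i = 0); [|lra].
        apply (@dot_self_zero m (fun i => c1 i - c2 i)); auto. change (dist2 m c1 c2 <= 0). pose proof D0 as D0x. unfold D in D0x. lra. }
      set (t := r / (r + 1)).
      assert (Tp : 0 < t) by (unfold t; apply Rdiv_lt_0_compat; lra).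
      assert (T1 : t < 1) by (unfold t; apply (Rmult_lt_reg_r (r + 1)); [lra|]; field_simplify; lra).
      assert (T2 : t < r) by (unfold t; apply (Rmult_lt_reg_r (r + 1)); [lra|]; field_simplify; nra).
      assert (Ie0 := e0_inR Hm). assert (N0 := e0_norm Hm).
      set (y := fun i => c1 i + t * e0 i).
      assert (Iy : inR m y) by (intros i Hi; unfold y; rewrite H1 ?Ie0; auto; ring).
      assert (Ey : y = x).
      { apply U; split; auto; [|rewrite -(dist2_extr y Ceq)]; unfold y; rewrite dist2_line N0; nra. }
      assert (Ec : c1 = x).
      { apply U; split; auto; [|rewrite -(dist2_extr c1 Ceq)]; rewrite dist2_self; lra. }
      pose proof (dist2_line m c1 t e0). rewrite N0 in H3. fold y in H3. rewrite Ey -Ec dist2_self in H3. nra.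
  - intros HD. exists (lpt c1 c2 (1/2)).
    assert (I := lpt_inR (1/2) H1 H2).
    split; [split; auto; rewrite lpt_1; lra|]. split; [split; auto; rewrite lpt_2; lra|].
    intros y [Y1 D1] [_ D2]. apply (funext_inR Y1 I). intros i Hi.
    pose proof (par_id m y c1 c2).
    assert (2 * y i - c1 i - c2 i = 0) by (apply (@dot_self_zero m (fun i => 2 * y i - c1 i - c2 i)); auto; lra).
    unfold lpt; lra.
Qed.

Definition en (n : nat) : pt := fun i => if Nat.eqb i n then 1 else 0.

Lemma sumR_0 n : sumR n (fun _ => 0) = 0.
Proof. induction n; simpl; [ring| rewrite IHn; ring]. Qed.

Lemma dot_en n x : dot (S n) x (en n) = x n.
Proof.
  unfold dot; simpl. rewrite (@sumR_ext n _ (fun _ => 0)).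
  - unfold en. rewrite Nat.eqb_refl sumR_0. ring.
  - intros i Hi. unfold en. destruct (Nat.eqb_spec i n); [lia|ring].
Qed.

Lemma sum_scale_sq n a b s : s <> 0 ->
  sumR n (fun i => (a i / s - b i / s) * (a i / s - b i / s)) * (s * s) = sumR n (fun i => (a i - b i) * (a i - b i)).
Proof. intros Hs. induction n; simpl; [ring|]. rewrite Rmult_plus_distr_r IHn. field; auto. Qed.

Lemma proj_from_H n H v0 rho : 0 < rho ->
  (forall x y i, H x i - H y i = H (fun j => x j - y j) i) ->
  (forall z, dot (S n) (H z) (H z) = dot (S n) z z) ->
  (forall z, dot (S n) z v0 = 0 -> H z n = 0) ->
  exists P : pt -> pt, (forall c, inR n (P c)) /\
    forall c c', dot (S n) c v0 = dot (S n) c' v0 -> dist2 n (P c) (P c') * rho = dist2 (S n) c c'.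
Proof.
  intros Hr Hlin Hn Hb.
  set (s := sqrt rho). assert (Ss : s * s = rho) by (apply sqrt_sqrt; lra).
  assert (Sp : 0 < s) by (apply sqrt_lt_R0; lra).
  exists (fun c i => if Nat.ltb i n then H c i / s else 0). split.
  - intros c i Hi. destruct (Nat.ltb_spec i n); [lia|auto].
  - intros c c' E. unfold dist2.
    rewrite (@sumR_ext n _ (fun i => (H c i / s - H c' i / s) * (H c i / s - H c' i / s))).
    2: { intros i Hi. destruct (Nat.ltb_spec i n); [auto|lia]. }
    rewrite -Ss sum_scale_sq; [|lra].
    set (z := fun j => c j - c' j).
    assert (Z0 : dot (S n) z v0 = 0) by (unfold z; rewrite dot_sub; lra).
    pose proof (Hb z Z0) as Hzn.
    assert (Hz2 : sumR n (fun i => H z i * H z i) = sumR (S n) (fun i => z i * z i)).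
    { pose proof (Hn z) as Hz. unfold dot in Hz. rewrite -Hz. simpl. rewrite Hzn. ring. }
    change (sumR (S n) (fun i => (c i - c' i) * (c i - c' i))) with (sumR (S n) (fun i => z i * z i)).
    rewrite -Hz2. apply sumR_ext. intros i _. rewrite Hlin. reflexivity.
Qed.

Lemma hh_id d x y w a b : dot d (fun i => x i - a * w i) (fun i => y i - b * w i)
  = dot d x y - b * dot d x w - a * dot d w y + a * b * dot d w w.
Proof. unfold dot; sumind d. Qed.

Lemma dot_l1 d x y b z : dot d x (fun i => y i - b * z i) = dot d x y - b * dot d x z.
Proof. unfold dot; sumind d. Qed.

Lemma householder n v0 rho : inR (S n) v0 -> 0 < dot (S n) v0 v0 -> 0 < rho ->
  exists P : pt -> pt, (forall c, inR n (P c)) /\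
    forall c c', dot (S n) c v0 = dot (S n) c' v0 -> dist2 n (P c) (P c') * rho = dist2 (S n) c c'.
Proof.
  intros Iv Pv Hr. set (n0 := dot (S n) v0 v0) in *.
  set (k0 := sqrt n0). assert (Kk : k0 * k0 = n0) by (unfold k0; apply sqrt_sqrt; lra).
  assert (Kp : 0 < k0) by (unfold k0; apply sqrt_lt_R0; lra).
  set (w := fun i => v0 i - k0 * en n i).
  set (W := dot (S n) w w).
  assert (Een : dot (S n) (en n) (en n) = 1) by (rewrite dot_en; unfold en; rewrite Nat.eqb_refl; auto).
  assert (Vw : dot (S n) v0 w = n0 - k0 * v0 n) by (unfold w; rewrite dot_l1 dot_en; reflexivity).
  assert (EW : W = 2 * (n0 - k0 * v0 n)).
  { unfold W, w. rewrite (hh_id (S n) v0 v0 (en n) k0 k0). fold n0. rewrite Een dot_en (dot_sym _ (en n) v0) dot_en. nra. }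
  destruct (Req_EM_T W 0) as [W0|W0].
  - apply (@proj_from_H n (fun x => x) v0 rho); auto.
    intros z Hz.
    assert (Hw : forall i, lt i (S n) -> w i = 0) by (apply dot_self_zero; fold W; lra).
    rewrite (@dot_prop (S n) z (en n) v0 k0) in Hz.
    + rewrite dot_en in Hz. nra.
    + intros i Hi. pose proof (Hw i Hi). unfold w in H. lra.
  - set (H := fun (x : pt) i => x i - (2 * dot (S n) x w / W) * w i).
    assert (HD : forall x y, dot (S n) (H x) (H y) = dot (S n) x y).
    { intros x y. unfold H. rewrite hh_id. fold W. rewrite (dot_sym _ w y). field. auto. }
    apply (@proj_from_H n H v0 rho); auto.
    + intros x y i. unfold H. rewrite dot_sub. field. auto.
    + intros z Hz. rewrite -(HD z v0) in Hz.
      rewrite (@dot_prop (S n) (H z) (en n) (H v0) k0) in Hz.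
      * rewrite dot_en in Hz. nra.
      * intros i Hi. unfold H. rewrite Vw. assert (E2 : 2 * (n0 - k0 * v0 n) / W = 1) by (rewrite EW; field; lra).
        rewrite E2. unfold w. ring.
Qed.

Lemma inR_S m x : inR m x -> inR (S m) x.
Proof. intros H i Hi; apply H; lia. Qed.

Lemma dist2_S m x y : dist2 (S m) x y = dist2 m x y + (x m - y m) * (x m - y m).
Proof. reflexivity. Qed.

Lemma dist2_lift m x y : inR m x -> inR m y -> dist2 (S m) x y = dist2 m x y.
Proof. intros Hx Hy. rewrite dist2_S Hx ?Hy; auto. ring. Qed.

Lemma dtang_balls d c1 c2 r : dtangent d (DBall c1 r) (DBall c2 r) <-> btang d c1 c2 (r*r).
Proof.
  unfold dtangent, btang, bin. split.
  - intros [[x|] [H1 [H2 U]]]; simpl in *; [|contradiction].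
    exists x; split; auto; split; auto. intros y Y1 Y2. assert (Some y = Some x) by (apply U; auto).
    injection H; auto.
  - intros [x [H1 [H2 U]]]. exists (Some x); simpl; split; auto; split; auto.
    intros [y|] Y1 Y2; simpl in *; [f_equal; apply U; auto|contradiction].
Qed.

Lemma ddisj_balls d c1 c2 r : (forall p, ~ (int_dball d (DBall c1 r) p /\ int_dball d (DBall c2 r) p)) <->
  (forall x, ~ (bint d c1 (r*r) x /\ bint d c2 (r*r) x)).
Proof.
  unfold bint. split.
  - intros H x Hx. apply (H (Some x)); simpl; auto.
  - intros H [x|] Hx; simpl in *; [apply (H x); auto| tauto].
Qed.

Definition TD d B1 B2 := dtangent d B1 B2 /\ (forall p, ~ (int_dball d B1 p /\ int_dball d B2 p)).

Lemma TD_sym d B1 B2 : TD d B1 B2 -> TD d B2 B1.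
Proof.
  intros [[p [H1 [H2 U]]] D]. split.
  - exists p. refine (conj H2 (conj H1 _)). intros q Q1 Q2; apply U; auto.
  - intros p' [Q1 Q2]; apply (D p'); auto.
Qed.

Lemma balls_level m c1 c2 : (1 <= m)%coq_nat -> inR m c1 -> inR m c2 ->
  (dtangent (S m) (DBall c1 1) (DBall c2 1) <-> dist2 m c1 c2 = 4) /\
  (4 <= dist2 m c1 c2 -> forall p, ~ (int_dball (S m) (DBall c1 1) p /\ int_dball (S m) (DBall c2 1) p)) /\
  (utangent m c1 c2 <-> dist2 m c1 c2 = 4) /\
  ((forall x, ~ (int_ubal m c1 x /\ int_ubal m c2 x)) -> 4 <= dist2 m c1 c2).
Proof.
  intros Hm H1 H2. assert (E := dist2_lift H1 H2).
  assert (I1 := inR_S H1). assert (I2 := inR_S H2).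
  rewrite dtang_balls ddisj_balls Rmult_1_r.
  rewrite eqb_tang; auto; try (solve [lia]); try (solve [lra]). rewrite eqb_disj; auto. rewrite E.
  split; [lra|]. split; [lra|]. split.
  - change (btang m c1 c2 1 <-> dist2 m c1 c2 = 4). rewrite eqb_tang; auto; try (solve [lia]); try (solve [lra]).
  - intros H. change (forall x, ~ (bint m c1 1 x /\ bint m c2 1 x)) in H. rewrite eqb_disj in H; auto. lra.
Qed.

Definition hs m (sg : R) := DHalf (fun j => sg * en m j) (-1).

Lemma hs_dot m sg x : dot (S m) (fun j => sg * en m j) x = sg * x m.
Proof. rewrite (@dot_propl (S m) x (en m) (fun j => sg * en m j) sg); [|auto]. rewrite dot_sym dot_en; auto. Qed.

Lemma en_inR m : inR (S m) (en m).
Proof. intros i Hi. unfold en. destruct (Nat.eqb_spec i m); [lia|auto]. Qed.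

Lemma hs_valid m sg : sg <> 0 -> valid_dball (S m) (hs m sg).
Proof. intros H. simpl. split.
  - intros i Hi. rewrite en_inR; auto; ring.
  - exists m. split; [lia|]. unfold en. rewrite Nat.eqb_refl. rewrite Rmult_1_r; auto. Qed.

Lemma en_m m : en m m = 1.
Proof. unfold en; rewrite Nat.eqb_refl; auto. Qed.

Lemma hs_hs m : TD (S m) (hs m 1) (hs m (-1)).
Proof.
  split.
  - exists None; simpl; split; auto; split; auto.
    intros [x|] Q1 Q2; auto. destruct Q1 as [_ Q1]; destruct Q2 as [_ Q2].
    rewrite hs_dot in Q1. rewrite hs_dot in Q2. lra.
  - intros [x|] [Q1 Q2]; simpl in *; [|auto]. destruct Q1 as [_ Q1]; destruct Q2 as [_ Q2].
    rewrite hs_dot in Q1. rewrite hs_dot in Q2. lra.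
Qed.

Lemma hs_ball m sg c : (sg = 1 \/ sg = -1) -> inR m c -> TD (S m) (hs m sg) (DBall c 1).
Proof.
  intros Hs Hc. assert (S2 : sg * sg = 1) by (destruct Hs; subst; ring).
  assert (Cm : c m = 0) by (apply Hc; lia).
  assert (Ic := inR_S Hc).
  split.
  - set (xs := fun i => c i + (- sg) * en m i).
    assert (Ix : inR (S m) xs) by (intros i Hi; unfold xs; rewrite Ic ?en_inR; auto; ring).
    exists (Some xs). simpl. split; [split; auto; rewrite hs_dot; unfold xs; rewrite Cm en_m; nra|].
    split. { split; auto. unfold xs. rewrite dist2_line. rewrite (@dot_en m (en m)) en_m. nra. }
    intros [x|] Q1 Q2; [|contradiction]. destruct Q1 as [Ix' Q1]; destruct Q2 as [_ Q2].
    rewrite hs_dot in Q1. rewrite dist2_S Cm in Q2.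
    pose proof (dist2_nonneg m x c).
    assert (X2 : x m * x m <= 1) by nra.
    assert (X1 : sg * x m = -1) by nra.
    assert (Xm : x m = - sg) by nra.
    assert (Dz : dist2 m x c <= 0) by nra.
    f_equal. apply (funext_inR Ix' Ix). intros i Hi. unfold xs.
    destruct (Nat.eq_dec i m) as [->|Hne].
    + rewrite Cm en_m Xm. ring.
    + assert (Him : lt i m) by lia.
      assert (x i - c i = 0) by (apply (@dot_self_zero m (fun i => x i - c i)); auto).
      unfold en. destruct (Nat.eqb_spec i m); [lia|]. lra.
  - intros [x|] [Q1 Q2]; simpl in *; [|auto]. destruct Q1 as [_ Q1]; destruct Q2 as [_ Q2].
    rewrite hs_dot in Q1. rewrite dist2_S Cm in Q2. pose proof (dist2_nonneg m x c). nra.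
Qed.

Definition Bk m alpha (V : Type) (F : nat -> pt) (C : V -> pt) (x : ('I_(2+alpha) + V)%type) : dball :=
  match x with
  | inl i => if Nat.eqb (nat_of_ord i) 0 then hs m 1
             else if Nat.eqb (nat_of_ord i) 1 then hs m (-1) else DBall (F (Nat.sub (nat_of_ord i) 2)) 1
  | inr v => DBall (C v) 1 end.

Lemma Bk_inl m alpha (V : Type) (F : nat -> pt) (C : V -> pt) (i : 'I_(2+alpha)) :
  (nat_of_ord i = 0%N /\ Bk m F C (inl i) = hs m 1) \/ (nat_of_ord i = 1%N /\ Bk m F C (inl i) = hs m (-1)) \/
  ((2 <= nat_of_ord i)%coq_nat /\ lt (Nat.sub (nat_of_ord i) 2) alpha /\ Bk m F C (inl i) = DBall (F (Nat.sub (nat_of_ord i) 2)) 1).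
Proof.
  have Hi := ltn_ord i. simpl.
  destruct (Nat.eqb_spec (nat_of_ord i) 0) as [E|E]; [left; auto|].
  destruct (Nat.eqb_spec (nat_of_ord i) 1) as [E1|E1]; [right; left; auto|].
  right; right. split; [lia|]. split; [lia|auto].
Qed.

Lemma ballTD m c1 c2 : (1 <= m)%coq_nat -> inR m c1 -> inR m c2 -> dist2 m c1 c2 = 4 -> TD (S m) (DBall c1 1) (DBall c2 1).
Proof.
  intros Hm H1 H2 HD. destruct (balls_level Hm H1 H2) as [A [B _]]. split; [apply A; auto| apply B; lra].
Qed.

Lemma dir_back m alpha (V : finType) (adj : rel V) : (1 <= m)%coq_nat -> irreflexive adj ->
  kissing_graph m alpha adj -> ball_packable (S m) (@join_adj (2 + alpha) V adj).
Proof.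
  intros Hm Hirr [F [C [HF [HFt [HC [HCd [HCF Hadj]]]]]]].
  set (B := @Bk m alpha V F C).
  assert (Pm : forall sg, sg = 1 \/ sg = -1 -> forall c, inR m c -> TD (S m) (hs m sg) (DBall c 1) /\ TD (S m) (DBall c 1) (hs m sg)).
  { intros sg Hs c Hc. split; [|apply TD_sym]; apply hs_ball; auto. }
  assert (Kinl : forall i j : 'I_(2+alpha), i <> j -> TD (S m) (B (inl i)) (B (inl j))).
  { intros i j Hij. assert (Hv : nat_of_ord i <> nat_of_ord j) by (intros E; apply Hij; apply val_inj; auto).
    destruct (Bk_inl m F C i) as [[Ei Bi]|[[Ei Bi]|[Ei1 [Ei2 Bi]]]];
    destruct (Bk_inl m F C j) as [[Ej Bj]|[[Ej Bj]|[Ej1 [Ej2 Bj]]]];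
    unfold B; rewrite Bi Bj; try lia.
    - apply hs_hs.
    - apply Pm; auto.
    - apply TD_sym, hs_hs.
    - apply Pm; auto.
    - apply Pm; auto.
    - apply Pm; auto.
    - apply ballTD; auto. apply (balls_level Hm (HF _ Ei2) (HF _ Ej2)). apply HFt; auto. lia. }
  assert (Kmix : forall i v, TD (S m) (B (inl i)) (B (inr v))).
  { intros i v. destruct (Bk_inl m F C i) as [[Ei Bi]|[[Ei Bi]|[Ei1 [Ei2 Bi]]]];
    unfold B; rewrite Bi; simpl.
    - apply Pm; auto.
    - apply Pm; auto.
    - apply ballTD; auto. rewrite dist2_sym. apply (balls_level Hm (HC v) (HF _ Ei2)). apply HCF; auto. }
  assert (Kinr : forall u v, u <> v -> (forall p, ~ (int_dball (S m) (B (inr u)) p /\ int_dball (S m) (B (inr v)) p)) /\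
            (adj u v <-> dtangent (S m) (B (inr u)) (B (inr v)))).
  { intros u v Huv. unfold B; simpl. destruct (balls_level Hm (HC u) (HC v)) as [A1 [A2 [A3 A4]]].
    split. apply A2, A4, HCd; auto.
    rewrite Hadj A1 -A3. tauto. }
  exists B. split; [split|].
  - intros [i|v].
    + destruct (Bk_inl m F C i) as [[Ei Bi]|[[Ei Bi]|[Ei1 [Ei2 Bi]]]]; unfold B; rewrite Bi.
      * apply hs_valid; lra.
      * apply hs_valid; lra.
      * split; [apply inR_S, HF; auto| lra].
    + simpl; split; [apply inR_S, HC| lra].
  - intros [i|u] [j|v] Hne.
    + apply Kinl. intros ->; auto.
    + apply Kmix.
    + intros p [P1 P2]. apply (proj2 (Kmix j u) p); auto.
    + apply Kinr. intros ->; auto.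
  - intros [i|u] [j|v]; simpl.
    + case: (eqVneq i j) => [<-|Hne].
      * split; [discriminate| intros [H _]; congruence].
      * split; [intros _|auto]. split; [intros E; injection E; intros ->; rewrite eqxx in Hne; discriminate|].
        apply Kinl. intros ->; rewrite eqxx in Hne; discriminate.
    + split; [intros _; split; [discriminate| apply Kmix]|auto].
    + split; [intros _; split; [discriminate| apply TD_sym, Kmix]|auto].
    + case: (eqVneq u v) => [<-|Hne].
      * rewrite Hirr. split; [discriminate| intros [H _]; congruence].
      * assert (Huv : u <> v) by (intros ->; rewrite eqxx in Hne; discriminate).
        rewrite (proj2 (Kinr u v Huv)). split; [intros H; split; auto; congruence| tauto].
Qed.

Lemma qdisj_sym d s1 s2 : qdisj d s1 s2 -> qdisj d s2 s1.
Proof. intros H p [H1 H2]; apply (H p); auto. Qed.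

Lemma core1 d s0 s1 : (1 <= d)%coq_nat -> qvalid d s0 -> qvalid d s1 -> qA s0 <= 0 -> qA s1 <= 0 -> qdisj d s0 s1 ->
  qA s0 = 0 /\ qA s1 = 0 /\ exists mu, 0 < mu /\ forall i, qv s1 i = - mu * qv s0 i.
Proof.
  intros Hd V0 V1 A0 A1 D.
  assert (E0 : qA s0 = 0).
  { destruct (Rle_lt_or_eq_dec _ _ A0) as [Hl|]; auto. exfalso.
    destruct (@L_far d s0 s1 Hd V0 V1 Hl A1) as [x [X1 X2]]. apply (D (Some x)); auto. }
  assert (E1 : qA s1 = 0).
  { destruct (Rle_lt_or_eq_dec _ _ A1) as [Hl|]; auto. exfalso.
    destruct (@L_far d s1 s0 Hd V1 V0 Hl A0) as [x [X1 X2]]. apply (D (Some x)); auto. }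
  split; auto; split; auto. apply (@L_half d s0 s1); auto.
Qed.

Lemma core2 d s0 s1 s mu : (1 <= d)%coq_nat -> qvalid d s0 -> qvalid d s1 -> qvalid d s ->
  qA s0 = 0 -> qA s1 = 0 -> 0 < mu -> (forall i, qv s1 i = - mu * qv s0 i) ->
  qdisj d s s0 -> qdisj d s s1 -> qtang d s s0 -> qtang d s s1 ->
  0 < qA s /\ dot d (qc s) (qv s0) = (mu * qC s0 - qC s1) / (4 * mu) /\
  qr d s = (qC s0 - 2 * ((mu * qC s0 - qC s1) / (4 * mu))) * (qC s0 - 2 * ((mu * qC s0 - qC s1) / (4 * mu))) / (4 * dot d (qv s0) (qv s0)).
Proof.
  intros Hd V0 V1 Vs A0 A1 Mu Hv D0 D1 T0 T1.
  assert (N0 : 0 < dot d (qv s0) (qv s0)) by (destruct V0 as [_ P]; rewrite A0 in P; lra).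
  assert (Apos : 0 < qA s).
  { destruct (Rlt_le_dec 0 (qA s)) as [H|H]; auto. exfalso.
    destruct (Rle_lt_or_eq_dec _ _ H) as [Hl|Heq].
    - destruct (@L_far d s s0 Hd Vs V0 Hl (Req_le _ _ A0)) as [x [X1 X2]]. apply (D0 (Some x)); auto.
    - destruct (L_half V0 Vs A0 Heq (qdisj_sym D0)) as [l [Hl Hl']].
      destruct (L_half V1 Vs A1 Heq (qdisj_sym D1)) as [l' [Hl2 Hl2']].
      assert (Z : forall i, lt i d -> qv s0 i = 0).
      { intros i _. pose proof (Hl' i). pose proof (Hl2' i). rewrite Hv in H1.
        assert ((l + l' * mu) * qv s0 i = 0) by nra.
        assert (0 < l + l' * mu) by nra. nra. }
      assert (dot d (qv s0) (qv s0) = 0).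
      { unfold dot. rewrite (@sumR_ext d _ (fun _ => 0)). apply sumR_0. intros i Hi; rewrite Z; auto; ring. }
      lra. }
  destruct (L_ball_half Vs V0 Apos A0 D0 T0) as [H0a H0b].
  destruct (L_ball_half Vs V1 Apos A1 D1 T1) as [H1a H1b].
  set (c := qc s) in *. set (v0 := qv s0) in *. set (t := dot d c v0).
  rewrite (@dot_prop d c v0 (qv s1) (- mu)) in H1a H1b; [|intros; apply Hv].
  rewrite (@dot_prop d (qv s1) v0 (qv s1) (- mu)) in H1b; [|intros; apply Hv].
  rewrite (@dot_propl d v0 v0 (qv s1) (- mu)) in H1b; [|intros; apply Hv].
  change (dot d c v0) with t in H0a, H0b, H1a, H1b.
  set (n0 := dot d v0 v0) in *. set (r := qr d s) in *.
  set (h0 := qC s0 - 2 * t) in *. set (h1 := qC s1 - 2 * (- mu * t)) in *.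
  assert (Hh : h1 * h1 = mu * mu * (h0 * h0)) by (rewrite H1b H0b; ring).
  assert (Hh1 : (h1 - mu * h0) * (h1 + mu * h0) = 0) by nra.
  assert (Hh3 : 0 < h1 + mu * h0) by nra.
  assert (Hh2 : h1 = mu * h0).
  { destruct (Rmult_integral _ _ Hh1) as [Z|Z]; lra. }
  assert (Et : t = (mu * qC s0 - qC s1) / (4 * mu)).
  { unfold h1, h0 in Hh2. apply (Rmult_eq_reg_l (4 * mu)); [|lra]. field_simplify; [|lra]. lra. }
  split; auto. split; auto.
  rewrite -Et. fold h0. apply (Rmult_eq_reg_l (4 * n0)); [|lra]. field_simplify; [|lra]. lra.
Qed.

Lemma q_ball_sets d s p : 0 < qA s ->
  (qin d s p <-> match p with Some x => bin d (qc s) (qr d s) x | None => False end) /\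
  (qint d s p <-> match p with Some x => bint d (qc s) (qr d s) x | None => False end).
Proof.
  intros Ha. destruct p as [x|]; simpl; [|split; split; intros; try contradiction; lra].
  unfold bin, bint. rewrite qf_ball; [|lra]. split; split; intros [H1 H2]; split; auto; nra.
Qed.

Lemma qtang_ball d s1 s2 r : 0 < qA s1 -> 0 < qA s2 -> qr d s1 = r -> qr d s2 = r ->
  (qtang d s1 s2 <-> btang d (qc s1) (qc s2) r) /\
  (qdisj d s1 s2 <-> forall x, ~ (bint d (qc s1) r x /\ bint d (qc s2) r x)).
Proof.
  intros A1 A2 R1 R2.
  assert (S1 := fun p => q_ball_sets d p A1). assert (S2 := fun p => q_ball_sets d p A2).
  rewrite R1 in S1. rewrite R2 in S2. unfold qtang, btang, qdisj. split; split.
  - intros [[x|] [H1 [H2 U]]]; [|apply (S1 None) in H1; contradiction].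
    apply (S1 (Some x)) in H1. apply (S2 (Some x)) in H2. exists x; split; auto; split; auto.
    intros y Y1 Y2. assert (Some y = Some x); [|congruence].
    apply U; [apply (S1 (Some y))|apply (S2 (Some y))]; auto.
  - intros [x [H1 [H2 U]]]. exists (Some x). split; [apply (S1 (Some x)); auto|].
    split; [apply (S2 (Some x)); auto|].
    intros [y|] Y1 Y2; [|apply (S1 None) in Y1; contradiction].
    apply (S1 (Some y)) in Y1. apply (S2 (Some y)) in Y2. f_equal; apply U; auto.
  - intros H x [X1 X2]. apply (H (Some x)). split; [apply (S1 (Some x))|apply (S2 (Some x))]; auto.
  - intros H [x|] [X1 X2]; [|apply (S1 None) in X1; auto].
    apply (H x). split; [apply (S1 (Some x)) in X1|apply (S2 (Some x)) in X2]; auto.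
Qed.

Definition ik (alpha k : nat) : 'I_(2+alpha) := @inord (1+alpha) k.
Lemma ikK alpha k : (k < 2 + alpha)%coq_nat -> nat_of_ord (ik alpha k) = k.
Proof. intros H. unfold ik. rewrite inordK //. lia. Qed.

Lemma dir_fwd m alpha (V : finType) (adj : rel V) : (1 <= m)%coq_nat -> (1 <= alpha)%N ->
  ball_packable (S m) (@join_adj (2 + alpha) V adj) -> kissing_graph m alpha adj.
Proof.
  intros Hm Ha [B [[Bv Bd] Badj]].
  assert (Hd : (1 <= S m)%coq_nat) by lia.
  set (x0 := inl (ik alpha 0) : ('I_(2+alpha) + V)%type).
  set (x1 := inl (ik alpha 1) : ('I_(2+alpha) + V)%type).
  assert (ik0 : nat_of_ord (ik alpha 0) = 0%N) by (apply ikK; lia).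
  assert (ik1 : nat_of_ord (ik alpha 1) = 1%N) by (apply ikK; lia).
  assert (K01 : x0 <> x1).
  { intros E; injection E; intros E'. assert (F := f_equal (@nat_of_ord (2+alpha)) E').
    rewrite ik0 ik1 in F; discriminate. }
  set (isK := fun y : ('I_(2+alpha) + V)%type => y <> x0 /\ y <> x1).
  assert (adjK : forall y, isK y -> join_adj adj y x0 /\ join_adj adj y x1).
  { intros [i|v] [N0 N1]; simpl; [|auto]. split; apply/eqP; intros ->; auto. }
  destruct (proj1 (Badj x0 x1) ltac:(simpl; apply/eqP; intros E; apply K01; unfold x0, x1; rewrite E; auto))
    as [_ [p [P0 [P1 _]]]].
  assert (Vp : vp (S m) p) by (apply (qin_vp (s := to_q (S m) (B x0))); apply (to_q_in (S m) (B x0) p); auto).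
  set (Q := fun y => Tm (S m) p (to_q (S m) (B y))).
  assert (QV : forall y, qvalid (S m) (Q y)) by (intros y; apply Tm_valid; auto; apply to_q_valid, Bv).
  assert (QD : forall y z, y <> z -> qdisj (S m) (Q y) (Q z)).
  { intros y z Hyz. apply (proj2 (Tm_props Vp _ _)). apply ddisj_q. apply Bd; auto. }
  assert (QT : forall y z, qtang (S m) (Q y) (Q z) <-> dtangent (S m) (B y) (B z)).
  { intros y z. rewrite (proj1 (Tm_props Vp _ _)). symmetry; apply dtang_q. }
  assert (Q0 : qA (Q x0) <= 0) by (apply (@Tm_inf (S m) p); apply (to_q_in (S m) (B x0) p); auto).
  assert (Q1 : qA (Q x1) <= 0) by (apply (@Tm_inf (S m) p); apply (to_q_in (S m) (B x1) p); auto).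
  destruct (core1 Hd (QV x0) (QV x1) Q0 Q1 (QD _ _ K01)) as [A0 [A1 [mu [Mu Hmu]]]].
  set (v0 := qv (Q x0)).
  set (T0 := (mu * qC (Q x0) - qC (Q x1)) / (4 * mu)).
  set (R0 := (qC (Q x0) - 2 * T0) * (qC (Q x0) - 2 * T0) / (4 * dot (S m) v0 v0)).
  assert (KP : forall y, isK y -> 0 < qA (Q y) /\ dot (S m) (qc (Q y)) v0 = T0 /\ qr (S m) (Q y) = R0).
  { intros y Hy. destruct (adjK y Hy) as [J0 J1]. destruct Hy as [N0 N1].
    apply (core2 Hd (QV x0) (QV x1) (QV y) A0 A1 Mu Hmu (QD _ _ N0) (QD _ _ N1)).
    - apply QT. apply Badj; auto.
    - apply QT. apply Badj; auto. }
  set (y2 := inl (ik alpha 2) : ('I_(2+alpha) + V)%type).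
  assert (ik2 : nat_of_ord (ik alpha 2) = 2%N) by (apply ikK; lia).
  assert (Ky2 : isK y2).
  { split; intros E; injection E; intros E'; assert (F := f_equal (@nat_of_ord (2+alpha)) E').
    - rewrite ik0 ik2 in F; discriminate.
    - rewrite ik1 ik2 in F; discriminate. }
  assert (R0p : 0 < R0).
  { destruct (KP y2 Ky2) as [Ap [_ Hr]]. rewrite -Hr. apply qr_pos; auto. lra. }
  assert (Iv0 : inR (S m) v0) by apply (QV x0).
  assert (Nv0 : 0 < dot (S m) v0 v0) by (destruct (QV x0) as [_ Pq]; rewrite A0 in Pq; unfold v0; lra).
  destruct (householder Iv0 Nv0 R0p) as [P [PI Pd]].
  set (Pc := fun y => P (qc (Q y))).
  assert (KK : forall y z, isK y -> isK z ->
    (dtangent (S m) (B y) (B z) <-> dist2 m (Pc y) (Pc z) = 4) /\ (y <> z -> 4 <= dist2 m (Pc y) (Pc z))).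
  { intros y z Hy Hz. destruct (KP y Hy) as [Ay [Dy Ry]]. destruct (KP z Hz) as [Az [Dz Rz]].
    assert (E := Pd (qc (Q y)) (qc (Q z)) ltac:(rewrite Dy Dz; auto)).
    fold (Pc y) (Pc z) in E.
    destruct (qtang_ball Ay Az Ry Rz) as [TB DB].
    assert (Icy : inR (S m) (qc (Q y))) by (apply qc_inR, (QV y)).
    assert (Icz : inR (S m) (qc (Q z))) by (apply qc_inR, (QV z)).
    split.
    - rewrite -QT TB eqb_tang; auto. rewrite -E. split; intros; nra.
    - intros Hyz. assert (H := QD _ _ Hyz). rewrite DB eqb_disj in H; auto. rewrite -E in H. nra. }
  set (Kv := fun k => inl (ik alpha (2 + k)) : ('I_(2+alpha) + V)%type).
  assert (KvK : forall k, lt k alpha -> isK (Kv k)).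
  { intros k Hk. assert (E2 : nat_of_ord (ik alpha (2 + k)) = (2 + k)%N) by (apply ikK; lia).
    split; intros E; injection E; intros E'; assert (F := f_equal (@nat_of_ord (2+alpha)) E').
    - rewrite ik0 E2 in F. lia.
    - rewrite ik1 E2 in F. lia. }
  assert (Kinr : forall v, isK (inr v)) by (intros v; split; discriminate).
  exists (fun k => Pc (Kv k)), (fun v => Pc (inr v)).
  split; [intros; apply PI|]. split.
  { intros i j Hi Hj Hij. destruct (KK _ _ (KvK i Hi) (KvK j Hj)) as [Tij _].
    apply (balls_level Hm (PI _) (PI _)). apply Tij. apply Badj. simpl.
    assert (Ei : nat_of_ord (ik alpha (2 + i)) = (2 + i)%N) by (apply ikK; lia).
    assert (Ej : nat_of_ord (ik alpha (2 + j)) = (2 + j)%N) by (apply ikK; lia).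
    apply/eqP. intros E. assert (F := f_equal (@nat_of_ord (2+alpha)) E). rewrite Ei Ej in F. lia. }
  split; [intros; apply PI|]. split.
  { intros u v Huv. destruct (KK _ _ (Kinr u) (Kinr v)) as [_ Duv].
    assert (H4 : 4 <= dist2 m (Pc (inr u)) (Pc (inr v))) by (apply Duv; congruence).
    unfold Pc in H4. apply (proj2 (eqb_disj 1 (PI (qc (Q (inr u)))) (PI (qc (Q (inr v)))))). lra. }
  split.
  { intros v i Hi. destruct (KK _ _ (Kinr v) (KvK i Hi)) as [Tvi _].
    apply (balls_level Hm (PI _) (PI _)). apply Tvi. apply Badj. simpl. auto. }
  { intros u v. destruct (KK _ _ (Kinr u) (Kinr v)) as [Tuv _].
    rewrite (proj1 (proj2 (proj2 (balls_level Hm (PI (qc (Q (inr u)))) (PI (qc (Q (inr v)))))))).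
    fold (Pc (inr u)) (Pc (inr v)). rewrite -Tuv.
    change (adj u v) with (join_adj adj (inr u : ('I_(2+alpha) + V)%type) (inr v)).
    rewrite Badj. split; intros [H1 H2]; split; auto; congruence. }
Qed.

Theorem theorem3p4 (d alpha : nat) (V : finType) (adj : rel V) :
  (2 <= d)%N -> (1 <= alpha)%N -> symmetric adj -> irreflexive adj ->
  (ball_packable d (@join_adj (2 + alpha) V adj) <-> kissing_graph (d - 1) alpha adj).
Proof.
  intros Hd Ha Hs Hi. destruct d as [|[|m]]; try discriminate.
  have -> : (m.+2 - 1)%N = m.+1 by lia.
  split; [apply dir_fwd| apply dir_back]; auto; lia.
Qed.
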